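(* Every $\frac{\kappa+1}{\kappa}$-APLS for the maximum matching problem on graphs of odd-girth at least $2\kappa+1$ has proof size $\Omega(\log\kappa)$.
   Context: All graphs are finite, connected and undirected, $G=(V,E)$, $N(v)$ is the set of neighbors of $v$; each node distinguishes its incident edges by port numbers. An input assignment $\mathsf{I}:V\to\{0,1\}^*$ and an output assignment $\mathsf{O}:V\to\{0,1\}^*$ give each node a local input and a local output; an IO graph $\langle G,\mathsf I,\mathsf O\rangle$ is a configuration graph with $S(v)=\mathsf I(v)\cdot\mathsf O(v)$. Given a universe $\mathcal U$ of configuration graphs and disjoint families $\mathcal F_Y,\mathcal F_N\subseteq\mathcal U$, a gap proof labeling scheme (GPLS) consists of a prover which, given a configuration graph in $\mathcal F_Y$, assigns a label $L(v)\in\{0,1\}^*$ to every node, and a verifier which at each node $v$ receives only $\langle S(v),L(v),L^N(v)\rangle$, where $L^N(v)$ is the vector of labels of $v$'s neighbors (indexed by port), and outputs True or False; the verifier accepts if all nodes output True and rejects otherwise. The GPLS is correct if (i) for every configuration graph in $\mathcal F_Y$ the verifier accepts under the prover's labels, and (ii) for every configuration graph in $\mathcal F_N$ the verifier rejects under every label assignment. Its proof size is the maximum label length assigned by the prover over configuration graphs in $\mathcal F_Y$. For an optimization problem $\Psi=\langle\Pi,f\rangle$ ($\Pi$ a set of IO graphs = feasible solutions, $f$ integer objective, $OPT_\Psi(G,\mathsf I)$ the optimum over feasible $\mathsf O$) and $\alpha\ge1$, an $\alpha$-APLS is a GPLS over $\mathcal U=\{\langle G,\mathsf I,\mathsf O\rangle:\langle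 G,\mathsf I\rangle\text{ admits a feasible solution}\}$ with $\mathcal F_Y$ the IO graphs in $\Pi$ with $f=OPT_\Psi$, and $\mathcal F_N$ equal to $\mathcal U$ minus the IO graphs in $\Pi$ with $f\ge OPT_\Psi/\alpha$ (for a maximization problem). Restricting to a graph family means the universe contains only IO graphs whose underlying graph lies in the family. Maximum matching: the output encodes a set $M\subseteq E$ (each node knows which incident edge, if any, is in $M$); feasible iff $M$ is a matching; $f=|M|$ is maximized. The odd-girth of a graph is the length of its shortest odd cycle ($\infty$ if none). *)

(* Defs.v *)
From mathcomp Require Import all_boot.
Set Implicit Arguments. Unset Strict Implicit. Unset Printing Implicit Defensive.

(* A port-numbered graph on nodes 'I_n is given by adjacency lists:
   adj v is the list of neighbours of v, port p of v leads to
   nth v (adj v) p. *)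
Definition adjrel (n : nat) (adj : 'I_n -> seq 'I_n) : rel 'I_n :=
  fun x y => y \in adj x.

Definition is_graph (n : nat) (adj : 'I_n -> seq 'I_n) : Prop :=
  [/\ 0 < n,
      forall v, uniq (adj v),
      forall v, v \notin adj v,
      forall u v, (v \in adj u) = (u \in adj v)
    & forall u v, connect (adjrel adj) u v].

(* odd-girth (length of a shortest odd cycle, infinity if none) >= g:
   every odd cycle (sequence of >= 3 distinct vertices, consecutive ones
   adjacent, last adjacent to first) has length >= g. *)
Definition odd_girth_ge (n : nat) (adj : 'I_n -> seq 'I_n) (g : nat) : Prop :=
  forall c : seq 'I_n, uniq c -> cycle (adjrel adj) c ->
    odd (size c) -> 3 <= size c -> g <= size c.

(* Output of a node: None (no incident matching edge) or Some p
   (the edge at port p is in M). *)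
Definition output (n : nat) := 'I_n -> option nat.

Definition points (n : nat) (adj : 'I_n -> seq 'I_n) (O : output n)
    (u v : 'I_n) : bool :=
  if O u is Some p then (p < size (adj u)) && (nth u (adj u) p == v) else false.

(* The output encodes a set M of edges which is a matching (consistent
   encoding: each node names its unique M-edge, if any). *)
Definition feasible (n : nat) (adj : 'I_n -> seq 'I_n) (O : output n) : Prop :=
  (forall u p, O u = Some p -> p < size (adj u)) /\
  (forall u v, points adj O u v -> points adj O v u).

Definition msize (n : nat) (adj : 'I_n -> seq 'I_n) (O : output n) : nat :=
  #|[set e : 'I_n * 'I_n | (e.1 < e.2)%N && points adj O e.1 e.2]|.

Definition yes_inst (n : nat) (adj : 'I_n -> seq 'I_n) (O : output n) : Prop :=
  feasible adj O /\ forall O', feasible adj O' -> msize adj O' <= msize adj O.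

(* complement of F_N : feasible with |M| >= OPT / alpha, alpha = (k+1)/k,
   i.e. (k+1) |M| >= k * OPT *)
Definition approx_ok (k : nat) (n : nat) (adj : 'I_n -> seq 'I_n) (O : output n)
  : Prop :=
  feasible adj O /\
  forall O', feasible adj O' -> k * msize adj O' <= k.+1 * msize adj O.

(* Verifier: sees S(v) = O(v), its own label, and the labels of its
   neighbours indexed by port. *)
Definition verifier := option nat -> seq bool -> seq (seq bool) -> bool.

Definition prover :=
  forall (n : nat) (adj : 'I_n -> seq 'I_n) (O : output n), 'I_n -> seq bool.

Definition accepts (Vf : verifier) (n : nat) (adj : 'I_n -> seq 'I_n)
    (O : output n) (L : 'I_n -> seq bool) : Prop :=
  forall v, Vf (O v) (L v) (map L (adj v)).

(* universe: graphs of odd-girth >= 2k+1 (every graph admits the empty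
   matching, so every IO graph is in the universe) *)
Definition in_universe (k : nat) (n : nat) (adj : 'I_n -> seq 'I_n) : Prop :=
  is_graph adj /\ odd_girth_ge adj (2 * k + 1).

Definition is_APLS (k : nat) (P : prover) (Vf : verifier) : Prop :=
  forall n (adj : 'I_n -> seq 'I_n) (O : output n), in_universe k adj ->
    (yes_inst adj O -> accepts Vf adj O (P n adj O)) /\
    (~ approx_ok k adj O -> forall L, ~ accepts Vf adj O L).

Definition proof_size_le (k : nat) (P : prover) (s : nat) : Prop :=
  forall n (adj : 'I_n -> seq 'I_n) (O : output n), in_universe k adj ->
    yes_inst adj O -> forall v, size (P n adj O v) <= s.

(* Main.v *)
Require Import Defs.
From mathcomp Require Import all_boot zify.
Set Implicit Arguments. Unset Strict Implicit. Unset Printing Implicit Defensive.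

Lemma val_ordS m (i : 'I_m) : val (ordS i) = if i.+1 == m then 0 else i.+1.
Proof.
rewrite /= ; case: eqP => [->|ne]; first by rewrite modnn.
by rewrite modn_small //; have := ltn_ord i; lia.
Qed.

Lemma val_ord_pred m (i : 'I_m) : val (ord_pred i) = if i == 0 :> nat then m.-1 else i.-1.
Proof.
rewrite /=; have := ltn_ord i; case: eqP => [->|ne] H.
  by rewrite add0n modn_small //; lia.
have -> : (i + m).-1 = i.-1 + m by lia.
by rewrite modnDr modn_small //; lia.
Qed.

Definition cadj (m : nat) (i : 'I_m) : seq 'I_m := [:: ordS i; ord_pred i].

Lemma val_iterS m (u : 'I_m) j : val (iter j (@ordS m) u) = (u + j) %% m.
Proof.
elim: j => [|j IH]; first by rewrite addn0 modn_small.
by rewrite iterS /=; rewrite IH -[in LHS]addn1 modnDml -addnA addn1.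
Qed.

Lemma cadj_graph m : 2 < m -> is_graph (@cadj m).
Proof.
move=> m3; split.
- lia.
- move=> v; rewrite /cadj /= andbT inE -(inj_eq val_inj) val_ordS val_ord_pred.
  case: v => v hv /=; repeat case: ifP; move=> *; lia.
- move=> v; rewrite /cadj !inE -!(inj_eq val_inj) val_ordS val_ord_pred.
  case: v => v hv /=; repeat case: ifP; move=> *; lia.
- move=> u v; rewrite /cadj !inE -!(inj_eq val_inj) !val_ordS !val_ord_pred.
  case: v => v hv; case: u => u hu /=; repeat case: ifP; move=> *; lia.
- move=> u v.
  have Hc : forall j, connect (adjrel (@cadj m)) u (iter j (@ordS m) u).
    elim=> [|j IH]; first exact: connect0.
    apply: connect_trans IH _; apply: connect1; by rewrite /adjrel /cadj iterS inE eqxx.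
  have -> : v = iter (v + m - u) (@ordS m) u.
    apply: val_inj; rewrite val_iterS.
    have -> : u + (v + m - u) = v + m by have := ltn_ord u; lia.
    by rewrite modnDr modn_small.
  exact: Hc.
Qed.

Lemma cadj_walk m (x : 'I_m) p : path (adjrel (@cadj m)) x p ->
  exists pc qc, pc + qc = size p /\ last x p + qc = x + pc %[mod m].
Proof.
elim: p x => [|y p IH] x /=.
  by move=> _; exists 0, 0.
case/andP=> exy /IH [pc [qc [Hs Hm]]].
have m0 : 0 < m by have := ltn_ord x; lia.
move: exy; rewrite /adjrel /cadj !inE => /orP [] /eqP ey.
- exists pc.+1, qc; split; first by lia.
  rewrite Hm ey /=; by rewrite modnDml addSnnS.
- exists pc, qc.+1; split; first by lia.
  have -> : last y p + qc.+1 = (last y p + qc) + 1 by lia.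
  rewrite -[LHS]modnDml Hm modnDml ey /=.
  rewrite -addnA modnDml.
  have -> : (x + m).-1 + (pc + 1) = (x + pc) + m by lia.
  by rewrite modnDr.
Qed.

Lemma odd_closed m pc qc : qc = pc %[mod m] -> odd (pc + qc) -> odd m /\ m <= pc + qc.
Proof.
wlog le : pc qc / pc <= qc.
  move=> W H1 H2; case: (leqP pc qc) => h; first exact: W.
  rewrite addnC; apply: W; rewrite 1?addnC //; exact: ltnW.
move=> /eqP; rewrite eqn_mod_dvd // => dv od.
have oddd : odd (qc - pc) by rewrite oddB // addbC -oddD.
have d0 : 0 < qc - pc by case: (qc - pc) oddd.
split; first exact: dvdn_odd dv oddd.
have := dvdn_leq d0 dv; lia.
Qed.

Lemma cadj_oddgirth m g : (odd m -> g <= m) -> odd_girth_ge (@cadj m) g.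
Proof.
move=> Hg [|x p] _ //= cyc od _.
have [pc [qc [Hs Hm]]] := cadj_walk cyc.
move: Hm; rewrite last_rcons => /eqP; rewrite eqn_modDl => /eqP Hm.
rewrite size_rcons in Hs.
have [|om le] := odd_closed Hm; first by rewrite Hs.
by apply: leq_trans (Hg om) _; rewrite -Hs.
Qed.
Section Match.
Variables (n : nat) (adj : 'I_n -> seq 'I_n) (O : output n).

Lemma points_fun u v w : points adj O u v -> points adj O u w -> v = w.
Proof. rewrite /points; case: (O u) => // p /andP [_ /eqP <-] /andP [_ /eqP <-] //. Qed.

Lemma points_some u v : points adj O u v -> O u != None.
Proof. by rewrite /points; case: (O u). Qed.

Lemma points_adj u v : points adj O u v -> v \in adj u.
Proof. rewrite /points; case: (O u) => // p /andP [lt /eqP <-]; exact: mem_nth. Qed.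

Hypothesis feas : feasible adj O.
Hypothesis irr : forall v, v \notin adj v.

Lemma points_exists u : O u != None -> exists v, points adj O u v.
Proof.
case E: (O u) => [p|] // _; exists (nth u (adj u) p).
by rewrite /points E (feas.1 _ _ E) eqxx.
Qed.

Lemma points_neq u v : points adj O u v -> u != v.
Proof. move=> /points_adj; apply: contraL => /eqP ->; exact: irr. Qed.

Lemma msize_matched : 2 * msize adj O = #|[set v | O v != None]|.
Proof.
rewrite /msize; set E := [set e : 'I_n * 'I_n | _].
have inE' e : (e \in E) = (e.1 < e.2) && points adj O e.1 e.2 by rewrite inE.
have -> : [set v | O v != None] = (fst @: E) :|: (snd @: E).
  apply/setP => v; rewrite !inE; apply/idP/idP.
  - move=> /points_exists [w pvw].
    have pwv := feas.2 _ _ pvw.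
    have := points_neq pvw; rewrite neq_ltn => /orP [lt|lt].
    + apply/orP; left; apply/imsetP; exists (v, w) => //; by rewrite inE' lt pvw.
    + apply/orP; right; apply/imsetP; exists (w, v) => //; by rewrite inE' lt pwv.
  - case/orP => /imsetP [[a b] /=]; rewrite inE' /= => /andP [_ pab] ->.
    + exact: points_some pab.
    + exact: points_some (feas.2 _ _ pab).
rewrite cardsU.
have -> : fst @: E :&: snd @: E = set0.
  apply/setP => v; rewrite !inE; apply/negP => /andP [/imsetP [[a b] /=]] .
  rewrite inE' /= => /andP [lab pab] ->.
  case/imsetP => [[c d]]; rewrite inE' /= => /andP [lcd pcd] eb.
  subst d.
  have := points_fun pab (feas.2 _ _ pcd) => eb; subst b.
  by move: (ltn_trans lab lcd); rewrite ltnn.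
rewrite cards0 subn0 !card_in_imset; first by rewrite mul2n addnn.
- move=> [a b] [c d]; rewrite !inE' /= => /andP [_ pab] /andP [_ pcd] ebd; subst d.
  by rewrite (points_fun (feas.2 _ _ pab) (feas.2 _ _ pcd)).
- move=> [a b] [c d]; rewrite !inE' /= => /andP [_ pab] /andP [_ pcd] eac; subst c.
  by rewrite (points_fun pab pcd).
Qed.

End Match.
Lemma walk_shorten (T : Type) (X : eqType) (R Lf : T -> X) (U : seq X) (x0 : T) :
  (forall t, R t \in U) ->
  forall n w, 0 < n -> w 0 = x0 -> w n = x0 ->
    (forall i, i < n -> R (w i) = Lf (w i.+1)) ->
  exists n' (w' : nat -> T), [/\ 0 < n', n' <= size U, w' 0 = x0, w' n' = x0
     & forall i, i < n' -> R (w' i) = Lf (w' i.+1)].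
Proof.
move=> RU n; elim: n {-2}n (leqnn n) => [|N IH] n Hn w n0 w0 wn ws; first by lia.
case: (leqP n (size U)) => hU; first by exists n, w.
set xs := map (fun i => R (w i)) (iota 0 n).
have : ~~ uniq xs.
  have sub : {subset xs <= U} by move=> x /mapP [k _ ->].
  apply/negP => u; have := uniq_leq_size u sub.
  rewrite size_map size_iota; lia.
case/(uniqPn (R x0)) => i [j [lij]].
rewrite size_map size_iota => ljn.
move=> E1.
have eqR : R (w i) = R (w j).
  have hi : i < size (iota 0 n) by rewrite size_iota; lia.
  have hj : j < size (iota 0 n) by rewrite size_iota.
  move: E1; rewrite /xs (nth_map 0 _ _ hi) (nth_map 0 _ _ hj) !nth_iota ?add0n //; lia.
pose w' p := if p <= i then w p else w (p + (j - i)).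
apply: (IH (n - (j - i)) _ w').
- lia.
- lia.
- by rewrite /w' leq0n.
- rewrite /w' ifN; last by lia.
  by have -> : n - (j - i) + (j - i) = n by lia.
- move=> p hp; rewrite /w'.
  case: (ltngtP p i) => hpi.
  + apply: ws; lia.
  + rewrite addSn; apply: ws; lia.
  + subst p; have -> : i.+1 + (j - i) = j.+1 by lia.
    rewrite eqR; apply: ws; lia.
Qed.
Fixpoint Ulist (s : nat) : seq (seq bool) :=
  if s is s'.+1 then [::] :: [seq b :: l | b <- [:: true; false], l <- Ulist s']
  else [:: [::]].

Lemma Ulist_mem s l : size l <= s -> l \in Ulist s.
Proof.
elim: s l => [|s IH] [|b l] //= hl.
rewrite inE; apply/orP; right; rewrite !mem_cat.
by case: b; rewrite map_f ?orbT //; apply: IH.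
Qed.

Lemma Ulist_size s : size (Ulist s) < 2 ^ s.+1.
Proof.
elim: s => [|s IH] //. rewrite [Ulist _.+1]/=; rewrite /= !size_cat !size_map /= expnS; lia.
Qed.

Definition U3 s := [seq (ab, c) | ab <- [seq (a, b) | a <- Ulist s, b <- Ulist s],
                                  c <- [:: true; false]].

Lemma U3_mem s a b c : size a <= s -> size b <= s -> ((a, b), c) \in U3 s.
Proof.
move=> ha hb; apply/allpairsP; exists ((a, b), c) => /=.
split; [|by case: c|by []].
by apply/allpairsP; exists (a, b); split; rewrite ?Ulist_mem.
Qed.

Lemma U3_size s : size (U3 s) = (size (Ulist s) * size (Ulist s)) * 2.
Proof. by rewrite /U3 !size_allpairs. Qed.

Lemma pointsC m (O : output m) u v :
  points (@cadj m) O u v = ((O u == Some 0) && (v == ordS u)) || ((O u == Some 1) && (v == ord_pred u)).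
Proof.
rewrite /points; case: (O u) => [[|[|p]]|] //=; rewrite ?orbF // eq_sym //; by rewrite (eq_sym v).
Qed.

Lemma cfeas m (O : output m) :
  (forall u p, O u = Some p -> p < 2) ->
  (forall u, O u = Some 0 -> O (ordS u) = Some 1) ->
  (forall u, O u = Some 1 -> O (ord_pred u) = Some 0) ->
  feasible (@cadj m) O.
Proof.
move=> H1 H2 H3; split; first exact: H1.
move=> u v; rewrite !pointsC => /orP [] /andP [/eqP Ou /eqP ->].
- by rewrite (H2 _ Ou) ordSK eqxx /= ?orbT.
- by rewrite (H3 _ Ou) ord_predK eqxx /= eqxx.
Qed.

Definition Oper m : output m := fun i => if odd i then Some 1 else Some 0.

Lemma Oper_feas m : ~~ odd m -> feasible (@cadj m) (@Oper m).
Proof.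
move=> em; apply: cfeas.
- by move=> u p; rewrite /Oper; case: ifP => _ [<-].
- move=> u; rewrite /Oper; case: ifP => // ou _.
  rewrite val_ordS; case: eqP => [e|_]; last by rewrite /= ou.
  by move: em; rewrite -e /= ou.
- move=> u; rewrite /Oper; case: ifP => // ou _.
  rewrite val_ord_pred; case: eqP => [e|_]; first by move: ou; rewrite e.
  by move: ou; case: (nat_of_ord u) => // j /=; case: (odd j).
Qed.

Definition OY k : output (2 * k).+1 :=
  fun i => if val i == 2 * k then None else if odd (val i) then Some 1 else Some 0.

Lemma odd2k k : odd (2 * k) = false.
Proof. by rewrite oddM. Qed.

Lemma OY_step k (i : 'I_(2 * k).+1) : (OY i == Some 0) = (OY (ordS i) == Some 1).
Proof.
rewrite /OY val_ordS; case: i => j hj /=.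
case: (eqVneq j (2 * k)) => [e|ne].
  by rewrite e eqxx /=; case: ifP.
have -> : (j.+1 == (2 * k).+1) = false by apply/eqP; lia.
case: (eqVneq j.+1 (2 * k)) => [e3|ne3].
  have : odd j.+1 = odd (2 * k) by rewrite e3.
  by rewrite odd2k /=; case: (odd j).
by rewrite /=; case: (odd j).
Qed.

Lemma OY_feasible k : feasible (@cadj (2 * k).+1) (@OY k).
Proof.
apply: cfeas.
- by move=> u p; rewrite /OY; case: ifP => // _; case: ifP => _ [<-].
- by move=> u /eqP; rewrite OY_step => /eqP.
- move=> u h; apply/eqP; rewrite OY_step ord_predK; exact/eqP.
Qed.

Lemma cadj_irr m : 2 < m -> forall v : 'I_m, v \notin cadj v.
Proof. by move=> h; case: (cadj_graph h). Qed.

Lemma main k P Vf s : 0 < k -> is_APLS k P Vf -> proof_size_le k P s ->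
  k < 2 * size (U3 s).
Proof.
move=> k0 HA HS.
have N3 : 2 < (2 * k).+1 by lia.
have univY : in_universe k (@cadj (2 * k).+1).
  split; first exact: cadj_graph.
  by apply: cadj_oddgirth => _; lia.
have feasY := OY_feasible k.
have irrY := cadj_irr N3.
have matchedY : #|[set v | @OY k v != None]| = 2 * k.
  have -> : [set v | @OY k v != None] = [set~ ord_max].
    apply/setP => v; rewrite !inE /OY -(inj_eq val_inj) /=.
    by case: ifP => //; case: ifP.
  by rewrite cardsC1 card_ord.
have yesY : yes_inst (@cadj (2 * k).+1) (@OY k).
  split=> // O' fO'.
  have := msize_matched fO' irrY; have := msize_matched feasY irrY.
  rewrite matchedY; have := max_card [set v | O' v != None]; rewrite card_ord.
  lia.
set L := P _ (@cadj (2 * k).+1) (@OY k).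
have accY : forall v, Vf (OY v) (L v) (map L (cadj v)) := (HA _ _ _ univY).1 yesY.
have sizeL v : size (L v) <= s := HS _ _ _ univY yesY v.
pose R i := ((L i, L (ordS i)), @OY k i == Some 0).
pose Lf i := ((L (ord_pred i), L i), @OY k i == Some 1).
have RLf i : R i = Lf (ordS i) by rewrite /R /Lf ordSK OY_step.
have RU i : R i \in U3 s by apply: U3_mem.
have Hwn : iter (2 * k).+1 (@ordS _) (@ord_max (2 * k)) = ord_max.
  apply: val_inj; rewrite val_iterS /=.
  by rewrite modnDr modn_small.
have [l [w [l0 lU w0 wl ws]]] := @walk_shorten _ _ R Lf (U3 s) ord_max RU ((2 * k).+1)
   (fun p => iter p (@ordS _) ord_max) (ltn0Sn _) erefl Hwn
   (fun i _ => RLf _).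
rewrite ltnNge; apply/negP => big.
have M2 : 2 < 4 * l by lia.
pose phi (v : 'I_(4 * l)) := w (v %% l).
have wper r : r < l -> w ((r.+1) %% l) = w r.+1.
  move=> rl; case: (ltngtP r.+1 l) => h; first by rewrite modn_small.
  - lia.
  - by rewrite h modnn w0 wl.
have key v : R (phi v) = Lf (phi (ordS v)).
  rewrite /phi /= (modn_dvdm _ (dvdn_mull 4 (dvdnn l))).
  have hS x : x.+1 %% l = (x %% l).+1 %% l by rewrite -[x.+1]addn1 -modnDml addn1.
  rewrite hS wper; last exact: ltn_pmod.
  apply: ws; exact: ltn_pmod.
pose O2 (v : 'I_(4 * l)) := @OY k (phi v).
pose L2 (v : 'I_(4 * l)) := L (phi v).
have acc2 : accepts Vf (@cadj (4 * l)) O2 L2.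
  move=> v; have := accY (phi v); rewrite /O2 /L2 /cadj /=.
  have e1 := congr1 (fun x => x.1.2) (key v).
  have e2 := congr1 (fun x => x.1.1) (key (ord_pred v)).
  rewrite ord_predK /= in e2; rewrite /= in e1.
  by rewrite -e1 e2.
have univ2 : in_universe k (@cadj (4 * l)).
  split; first exact: cadj_graph.
  by apply: cadj_oddgirth; rewrite oddM.
apply: ((HA _ _ O2 univ2).2 _ L2 acc2).
case=> f2 H2.
have fP : feasible (@cadj (4 * l)) (@Oper (4 * l)) by apply: Oper_feas; rewrite oddM.
have Hp := H2 _ fP.
have irr2 := cadj_irr M2.
have e1 := msize_matched f2 irr2.
have e2 := msize_matched fP irr2.
have eT : [set v | @Oper (4 * l) v != None] = setT.
  by apply/setP => v; rewrite !inE /Oper; case: ifP.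
rewrite eT cardsT card_ord in e2.
have a0 : 0 < 4 * l by lia.
have a1 : l < 4 * l by lia.
have : #|[set v | O2 v != None]| <= 4 * l - 2.
  have sub : [set v | O2 v != None] \subset ~: [set Ordinal a0; Ordinal a1].
    apply/subsetP => v; rewrite !inE => ne; apply/negP => /orP [] /eqP ev; move: ne;
      rewrite /O2 /phi ev /=.
    - by rewrite mod0n w0 /OY /= eqxx.
    - by rewrite modnn w0 /OY /= eqxx.
  have := subset_leq_card sub.
  have := cardsC [set Ordinal a0; Ordinal a1].
  rewrite cards2 card_ord.
  have -> : (Ordinal a0 != Ordinal a1) by rewrite -(inj_eq val_inj) /=; lia.
  lia.
move=> hc.
move: Hp e1 e2 hc; set a := msize _ O2; set b := msize _ _ => Hp e1 e2 hc.
have hb : b = 2 * l by lia.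
have ha : a <= (2 * l).-1 by lia.
have := leq_mul (leqnn k.+1) ha.
rewrite hb in Hp.
have h2l : 2 * l <= k by apply: leq_trans big; rewrite leq_mul2l lU.
have t0 : 0 < 2 * l by lia.
move: (2 * l) h2l Hp ha t0 => t ht Hp ha t0.
case: t t0 ht Hp ha => // t _ ht Hp ha /=.
move=> h.
have : k * t.+1 <= k.+1 * t by apply: leq_trans Hp h.
nia.
Qed.

Theorem theorem5p17 :
  exists c k0 : nat, forall k : nat, 0 < k -> k0 <= k ->
    forall (P : prover) (Vf : verifier) (s : nat),
      is_APLS k P Vf -> proof_size_le k P s ->
      trunc_log 2 k <= c * s.
Proof.
exists 5, 4 => k k0 k4 P Vf s HA HS.
have hk := main k0 HA HS.
rewrite U3_size in hk.
have hu := Ulist_size s.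
case: s hk hu HA HS => [|s] hk hu _ _.
  by move: hk; rewrite /= ; lia.
have hX : 2 ^ trunc_log 2 k <= k by apply: trunc_logP.
have hp : 2 ^ (2 * s.+1 + 4) = 2 ^ s.+2 * 2 ^ s.+2 * 4.
  rewrite (_ : 2 * s.+1 + 4 = s.+2 + s.+2 + 2); last by lia. by rewrite !expnD.
have : 2 ^ trunc_log 2 k < 2 ^ (2 * s.+1 + 4).
  rewrite hp; move: (2 ^ s.+2) hu => X hu.
  move: (size (Ulist s.+1)) hu hk => u hu hk.
  nia.
rewrite ltn_exp2l //; lia.
Qed.
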